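(* Let $\mu>0$ and $\mathbf{C}>0$, and let all policies be restricted to the class $\Pi_{\mathbf{C}}$ of conditional densities bounded by $\mathbf{C}$ (defined in the context). Then for every bounded value function $V:\mathcal{S}\to\mathbb{R}$ and every $s\in\mathcal{S}$, $$\mathcal{B}_{\mu}V(s)-\mathcal{B}V(s)\in[\mu(1-\mathbf{C}),\,\mu].$$
   Context: Consider a Markov decision process with state space $\mathcal{S}$, continuous action space $\mathcal{A}\subseteq\mathbb{R}$ (Lebesgue measurable; $\sigma$ denotes Lebesgue measure), transition kernel $\mathbf{P}(\cdot\mid s,a)$, bounded reward function $R(s',s,a)$ and discount factor $\gamma\in[0,1)$. For a bounded $V:\mathcal{S}\to\mathbb{R}$ put $Q_V(s,a)=\mathbb{E}_{S'\sim\mathbf{P}(\cdot\mid s,a)}[R(S',s,a)+\gamma V(S')]$. (Standing assumption) Every policy considered is a conditional probability density $\pi(\cdot\mid s)$ on $\mathcal{A}$ (w.r.t. Lebesgue measure) with $\pi(a\mid s)\le\mathbf{C}$ for all $s,a$; denote this class by $\Pi_{\mathbf{C}}$. The Bellman operator is $\mathcal{B}V(s)=\sup_{\pi\in\Pi_{\mathbf{C}}}\int_{\mathcal{A}}Q_V(s,a)\pi(a\mid s)\,da$, and for $\mu>0$ the quasi-optimal Bellman operator is $$\mathcal{B}_{\mu}V(s)=\sup_{\pi\in\Pi_{\mathbf{C}}}\int_{\mathcal{A}}\Big[Q_V(s,a)\pi(a\mid s)+\mu\big(\pi(a\mid s)-\pi(a\mid s)^2\big)\Big]da .$$ *)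

(* Defs.v *)
From mathcomp Require Import all_boot all_order all_algebra.
Import Order.TTheory GRing.Theory Num.Theory.
From mathcomp Require Import all_classical all_reals all_analysis.
Set Implicit Arguments. Unset Strict Implicit. Unset Printing Implicit Defensive.
Local Open Scope classical_set_scope.
Local Open Scope ring_scope.

(* The real line equipped with the Lebesgue (i.e. completed Borel)
   sigma-algebra; its measure is [completed_lebesgue_measure]. *)
Notation LR R := (caratheodory_type (R:=R)
   (T:=lebesgue_stieltjes_measure_ocitv_type__canonical__measurable_structure_SemiRingOfSets R)
   (wlength idfun)^*%mu).

Definition Qfun {d} {T : measurableType d} {R : realType}
  (P : R.-pker (T * LR R) ~> T) (Rw : T -> T -> LR R -> R) (gamma : R)
  (V : T -> R) (s : T) (a : LR R) : R :=
  fine (\int[P (s, a)]_(s' in setT) (Rw s' s a + gamma * V s')%:E)%E.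

Definition is_policy {d} {T : measurableType d} {R : realType}
  (A : set (LR R)) (C : R) (pi : T -> LR R -> R) : Prop :=
  [/\ measurable_fun (setT `*` A) (fun p : T * LR R => pi p.1 p.2),
      (forall s a, A a -> 0 <= pi s a /\ pi s a <= C) &
      (forall s, (\int[completed_lebesgue_measure]_(a in A) (pi s a)%:E)%E = 1%E)].

Definition bellman {d} {T : measurableType d} {R : realType}
  (P : R.-pker (T * LR R) ~> T) (Rw : T -> T -> LR R -> R) (gamma : R)
  (A : set (LR R)) (C : R) (V : T -> R) (s : T) : R :=
  sup [set x | exists pi, is_policy A C pi /\
     x = fine (\int[completed_lebesgue_measure]_(a in A)
                 (Qfun P Rw gamma V s a * pi s a)%:E)%E].

Definition bellman_mu {d} {T : measurableType d} {R : realType}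
  (P : R.-pker (T * LR R) ~> T) (Rw : T -> T -> LR R -> R) (gamma : R)
  (A : set (LR R)) (C mu : R) (V : T -> R) (s : T) : R :=
  sup [set x | exists pi, is_policy A C pi /\
     x = fine (\int[completed_lebesgue_measure]_(a in A)
                 (Qfun P Rw gamma V s a * pi s a
                  + mu * (pi s a - pi s a ^+ 2))%:E)%E].

(* Main.v *)
Require Import Defs.
From mathcomp Require Import all_boot all_order all_algebra.
Import Order.TTheory GRing.Theory Num.Theory.
From mathcomp Require Import all_classical all_reals all_analysis.
From mathcomp Require Import lra measurable_realfun.
Local Open Scope classical_set_scope.
Local Open Scope ring_scope.
Set Implicit Arguments.

Section key.
Context d (X : measurableType d) (R : realType) (m : {measure set X -> \bar R})
  (D : set X) (mD : measurable D).
Variables (q p : X -> R) (K C : R).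
Hypotheses (mq : measurable_fun D q) (qK : forall x, D x -> `|q x| <= K)
  (mp : measurable_fun D p) (p0 : forall x, D x -> 0 <= p x /\ p x <= C)
  (p1 : (\int[m]_(x in D) (p x)%:E = 1)%E).

Let ip : m.-integrable D (EFin \o p).
Proof.
apply/integrableP; split; first exact/measurable_EFinP.
rewrite (eq_integral (fun x => (p x)%:E)) ?p1 ?ltry// => x /[!inE] Dx.
by rewrite /comp abse_EFin ger0_norm //; case: (p0 Dx).
Qed.

Let iqp : m.-integrable D (EFin \o (fun x => q x * p x)).
Proof.
apply: (@le_integrable _ _ _ _ _ mD _ (fun x => K%:E * (EFin \o p) x)%E).
- by apply/measurable_EFinP; exact: measurable_funM.
- move=> x Dx; rewrite /comp -EFinM !abse_EFin lee_fin normrM.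
  case: (p0 Dx) => h0 h1.
  rewrite normrM [`|p x|]ger0_norm //.
  by apply: ler_wpM2r => //; apply: le_trans (qK Dx) (ler_norm K).
- exact: integrableZl.
Qed.

Let ipp : m.-integrable D (EFin \o (fun x => p x ^+ 2)).
Proof.
apply: (@le_integrable _ _ _ _ _ mD _ (fun x => C%:E * (EFin \o p) x)%E).
- by apply/measurable_EFinP; exact: measurable_funX.
- move=> x Dx; rewrite /comp -EFinM !abse_EFin lee_fin.
  case: (p0 Dx) => h0 h1.
  rewrite ger0_norm ?exprn_ge0 // ger0_norm ?mulr_ge0 //; last exact: le_trans h1.
  by rewrite expr2; apply: ler_wpM2r.
- exact: integrableZl.
Qed.

Lemma key_bound : `|fine (\int[m]_(x in D) (q x * p x)%:E)%E| <= K.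
Proof.
have fI : (\int[m]_(x in D) (q x * p x)%:E)%E \is a fin_num := integrable_fin_num mD iqp.
rewrite -lee_fin -abse_EFin fineK //.
have mqp : measurable_fun D (fun x => (q x * p x)%:E).
  by apply/measurable_EFinP; exact: measurable_funM.
apply: le_trans (le_abse_integral m mD mqp) _.
apply: (@le_trans _ _ (\int[m]_(x in D) (K%:E * (p x)%:E))%E).
  apply: ge0_le_integral.
  - by [].
  - by move=> x _; exact: abse_ge0.
  - apply: measurableT_comp => //; apply/measurable_EFinP; exact: measurable_funM.
  - by apply/measurable_EFinP; apply: measurable_funM => //; exact: measurable_cst.
  - move=> x Dx; rewrite abse_EFin -EFinM lee_fin normrM.
    case: (p0 Dx) => h0 h1; rewrite [`|p x|]ger0_norm //.
    by apply: ler_wpM2r => //; exact: qK.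
by rewrite (integralZl mD ip) p1 mule1.
Qed.

Lemma key_diff (mu : R) : 0 < mu ->
  mu * (1 - C) <= fine (\int[m]_(x in D) (q x * p x + mu * (p x - p x ^+ 2))%:E)%E
                  - fine (\int[m]_(x in D) (q x * p x)%:E)%E
  /\ fine (\int[m]_(x in D) (q x * p x + mu * (p x - p x ^+ 2))%:E)%E
                  - fine (\int[m]_(x in D) (q x * p x)%:E)%E <= mu.
Proof.
move=> mu0.
have -> : (\int[m]_(x in D) (q x * p x + mu * (p x - p x ^+ 2))%:E =
   \int[m]_(x in D) ((EFin \o (fun x => q x * p x)%R) x + mu%:E * ((p x)%:E - EFin (p x ^+ 2)%R)))%E.
  by apply: eq_integral => x _; rewrite /= EFinD (EFinM mu) EFinB.
rewrite integralD //; last first.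
  apply: (integrableZl mD mu); exact: (integrableB mD ip ipp).
rewrite (integralZl mD); last exact: (integrableB mD ip ipp).
rewrite (integralB_EFin mD ip ipp) p1.
have fI := integrable_fin_num mD iqp.
have fP := integrable_fin_num mD ipp.
have b0 : (0 <= \int[m]_(x in D) (p x ^+ 2)%:E)%E.
  by apply: integral_ge0 => x Dx; rewrite lee_fin exprn_ge0 //; case: (p0 Dx).
have bC : (\int[m]_(x in D) (p x ^+ 2)%:E <= C%:E)%E.
  apply: (@le_trans _ _ (\int[m]_(x in D) (C%:E * (p x)%:E))%E).
    apply: le_integral => //; first exact: integrableZl.
    move=> x /[!inE] Dx; rewrite lee_fin; case: (p0 Dx) => h0 h1.
    by rewrite expr2; apply: ler_wpM2r.
  by rewrite (integralZl mD ip) p1 mule1.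
move: fI fP b0 bC.
set I := (\int[m]_(x in D) _)%E.
set J := (\int[m]_(x in D) _)%E.
move=> fI fP b0 bC.
rewrite -(fineK fI) -(fineK fP) in b0 bC *.
rewrite lee_fin in b0; rewrite lee_fin in bC.
rewrite -EFinB -EFinM -EFinD /=.
split; nra.
Qed.

End key.

Lemma fine_abs_le (R : realType) (x : \bar R) (K : R) :
  0 <= K -> (`|x| <= K%:E)%E -> `|fine x| <= K.
Proof.
by case: x => [r| |] //= K0; rewrite ?lee_fin // normr0.
Qed.

Section bdd.
Context d (X : measurableType d) (R : realType) (m : {measure set X -> \bar R}).
Variables (f : X -> R) (K : R).
Hypotheses (m1 : m setT = 1%E) (mf : measurable_fun setT f)
  (fK : forall x, `|f x| <= K).

Let K0 : 0 <= K.
Proof.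
case: (pselect (exists x : X, True)) => [[x _]|nx].
  exact: le_trans (normr_ge0 _) (fK x).
exfalso; move: m1; rewrite (_ : setT = set0) ?measure0 //.
  by move=> /(congr1 fine) /= /eqP; rewrite eq_sym oner_eq0.
by rewrite predeqE => x; split => // _; apply: nx; exists x.
Qed.

Let icst : m.-integrable setT (EFin \o (fun _ => K)).
Proof.
apply/integrableP; split; first exact/measurable_EFinP/measurable_cst.
rewrite (eq_integral (cst `|K|%:E)); last by move=> x _; rewrite /comp abse_EFin.
by rewrite integral_cst // m1 mule1 ltry.
Qed.

Let iF : m.-integrable setT (EFin \o f).
Proof.
apply: (@le_integrable _ _ _ _ _ measurableT _ (EFin \o (fun _ => K))).
- exact/measurable_EFinP.
- move=> x _; rewrite /comp !abse_EFin lee_fin [`|K|]ger0_norm //.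
- exact: icst.
Qed.

Lemma bdd_bound : `|fine (\int[m]_(x in setT) (f x)%:E)%E| <= K.
Proof.
apply: fine_abs_le => //.
apply: le_trans (le_abse_integral m measurableT _) _.
  exact/measurable_EFinP.
apply: (@le_trans _ _ (\int[m]_(x in setT) (cst K%:E x))%E).
  apply: ge0_le_integral => //.
  - apply: measurableT_comp => //; exact/measurable_EFinP.
  - by move=> x _; rewrite abse_EFin lee_fin.
by rewrite integral_cst // m1 mule1.
Qed.

Lemma bdd_shift : (\int[m]_(x in setT) (f x + K)%:E)%E
   = (fine (\int[m]_(x in setT) (f x)%:E)%E + K)%:E.
Proof.
have -> : (\int[m]_(x in setT) (f x + K)%:E =
   \int[m]_(x in setT) ((EFin \o f) x + (EFin \o (fun _ => K)) x))%E.
  by apply: eq_integral => x _; rewrite /= EFinD.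
rewrite integralD_EFin //.
have fI := integrable_fin_num measurableT iF.
rewrite EFinD fineK //.
congr (_ + _)%E.
by rewrite (eq_integral (cst K%:E)) // integral_cst // m1 mule1.
Qed.

End bdd.


Lemma sup_diff (R : realType) (U : Type) (Q : U -> Prop) (I J : U -> R) (K a b : R) :
  (exists u, Q u) -> (forall u, Q u -> `|I u| <= K) ->
  (forall u, Q u -> a <= J u - I u /\ J u - I u <= b) ->
  a <= sup [set x | exists u, Q u /\ x = J u] - sup [set x | exists u, Q u /\ x = I u]
  /\ sup [set x | exists u, Q u /\ x = J u] - sup [set x | exists u, Q u /\ x = I u] <= b.
Proof.
move=> [u0 Qu0] hK hab.
set SI := [set x | exists u, Q u /\ x = I u].
set SJ := [set x | exists u, Q u /\ x = J u].
have neI : SI !=set0 by exists (I u0), u0.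
have neJ : SJ !=set0 by exists (J u0), u0.
have hsI : has_sup SI.
  split => //; exists K => _ [u [Qu ->]].
  by have := hK u Qu; rewrite ler_norml => /andP[].
have hsJ : has_sup SJ.
  split => //; exists (K + b) => _ [u [Qu ->]].
  have := hK u Qu; rewrite ler_norml => /andP[_ h].
  have [_ h2] := hab u Qu; lra.
have uI := sup_upper_bound hsI.
have uJ := sup_upper_bound hsJ.
split.
  suff : sup SI <= sup SJ - a by lra.
  apply: ge_sup => // _ [u [Qu ->]].
  have [h1 _] := hab u Qu.
  have : J u <= sup SJ by apply: uJ; exists u.
  lra.
suff : sup SJ <= sup SI + b by lra.
apply: ge_sup => // _ [u [Qu ->]].
have [_ h2] := hab u Qu.
have : I u <= sup SI by apply: uI; exists u.
lra.
Qed.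
Unset Implicit Arguments.

Theorem theorem1 (d : measure_display) (T : measurableType d) (R : realType)
  (P : R.-pker (T * LR R) ~> T) (Rw : T -> T -> LR R -> R) (gamma : R)
  (A : set (LR R)) (C mu : R) (V : T -> R) (s : T) :
  measurable A ->
  measurable_fun setT (fun p : T * (T * LR R) => Rw p.1 p.2.1 p.2.2) ->
  (exists M : R, forall s' s0 a, `|Rw s' s0 a| <= M) ->
  0 <= gamma < 1 ->
  0 < mu -> 0 < C ->
  (exists pi : T -> LR R -> R, is_policy A C pi) ->
  measurable_fun setT V ->
  (exists M : R, forall s', `|V s'| <= M) ->
  mu * (1 - C) <= bellman_mu P Rw gamma A C mu V s - bellman P Rw gamma A C V s
  /\ bellman_mu P Rw gamma A C mu V s - bellman P Rw gamma A C V s <= mu.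
Proof.
move=> mA mRw [M1 hM1] /andP[g0 g1] mu0 C0 [pi0 hpi0] mV [M2 hM2].
pose K0 := `|M1| + gamma * `|M2|.
pose f (sa : T * LR R) (s' : T) := Rw s' sa.1 sa.2 + gamma * V s'.
have fK : forall sa s', `|f sa s'| <= K0.
  move=> sa s'; rewrite /f /K0.
  apply: le_trans (ler_normD _ _) _.
  apply: lerD; first exact: le_trans (hM1 _ _ _) (ler_norm _).
  rewrite normrM (ger0_norm g0); apply: ler_wpM2l => //.
  exact: le_trans (hM2 _) (ler_norm _).
have mf : forall sa, measurable_fun setT (f sa).
  move=> sa; apply: measurable_funD.
    exact: (measurableT_comp mRw (pair2_measurable sa)).
  by apply: measurable_funM => //; exact: measurable_cst.
have P1 : forall sa, P sa setT = 1%E by move=> sa; exact: prob_kernel.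
have Qb : forall a, `|Qfun P Rw gamma V s a| <= K0.
  by move=> a; exact: (bdd_bound _ _ (P1 (s, a)) (mf (s, a)) (fK (s, a))).
have mQ : measurable_fun setT (Qfun P Rw gamma V s).
  pose F (z : (T * LR R) * T) := (f z.1 z.2 + K0)%:E.
  have F0 : forall z, (0 <= F z)%E.
    move=> z; rewrite /F lee_fin -lerBlDr sub0r.
    by have := fK z.1 z.2; rewrite ler_norml => /andP[].
  have mF : measurable_fun setT F.
    apply/measurable_EFinP; apply: measurable_funD; last exact: measurable_cst.
    apply: measurable_funD.
      exact: (measurableT_comp mRw (measurable_fun_pair measurable_snd measurable_fst)).
    apply: measurable_funM; first exact: measurable_cst.
    exact: (measurableT_comp mV measurable_snd).
  have mG := measurable_fun_integral_finite_kernel F P F0 mF.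
  rewrite (_ : Qfun P Rw gamma V s = fun a => fine (\int[P (s, a)]_y F ((s, a), y))%E - K0).
    apply: measurable_funB; last exact: measurable_cst.
    have mG2 := measurable_fun_pair2 s mG.
    exact: (measurableT_comp (fine_measurable measurableT) mG2).
  apply/funext => a.
  have -> : (\int[P (s, a)]_y F ((s, a), y))%E = (\int[P (s, a)]_(y in setT) (f (s,a) y + K0)%:E)%E.
    reflexivity.
  rewrite (bdd_shift _ _ (P1 (s, a)) (mf (s, a)) (fK (s, a))).
  have h : forall r : R, fine r%:E = r by [].
  rewrite h addrK.
  reflexivity.
have key : forall pi, is_policy A C pi ->
   `|fine (\int[completed_lebesgue_measure]_(a in A) (Qfun P Rw gamma V s a * pi s a)%:E)%E| <= K0
   /\ (mu * (1 - C) <= fine (\int[completed_lebesgue_measure]_(a in A)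
          (Qfun P Rw gamma V s a * pi s a + mu * (pi s a - pi s a ^+ 2))%:E)%E
       - fine (\int[completed_lebesgue_measure]_(a in A) (Qfun P Rw gamma V s a * pi s a)%:E)%E
     /\ fine (\int[completed_lebesgue_measure]_(a in A)
          (Qfun P Rw gamma V s a * pi s a + mu * (pi s a - pi s a ^+ 2))%:E)%E
       - fine (\int[completed_lebesgue_measure]_(a in A) (Qfun P Rw gamma V s a * pi s a)%:E)%E <= mu).
  move=> pi [mpi hpi ipi].
  have mps : measurable_fun A (pi s).
    have := measurable_comp (measurableX measurableT mA) _ mpi
      (measurable_funTS (pair1_measurable s) : measurable_fun A (pair s)).
    apply => //.
    by move=> _ [a Aa <-].
  split.
    exact: (key_bound _ mA _ _ (measurable_funTS mQ) (fun a _ => Qb a) mps (hpi s) (ipi s)).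
  exact: (key_diff _ mA _ _ (measurable_funTS mQ) (fun a _ => Qb a) mps (hpi s) (ipi s) _ mu0).
rewrite /bellman /bellman_mu.
apply: (@sup_diff _ _ (is_policy A C)
  (fun pi => fine (\int[completed_lebesgue_measure]_(a in A) (Qfun P Rw gamma V s a * pi s a)%:E)%E)
  (fun pi => fine (\int[completed_lebesgue_measure]_(a in A)
          (Qfun P Rw gamma V s a * pi s a + mu * (pi s a - pi s a ^+ 2))%:E)%E) K0).
- by exists pi0.
- by move=> u h; exact: (proj1 (key u h)).
- by move=> u h; exact: (proj2 (key u h)).
Qed.
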